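(* $\mathbb{Y}_{\tt k}\subseteq\Theta_{\tt k}$; that is, for every $w\in S_n^{\tt k}$, the inversion set $\{(a,b)\in\Omega_{GL_n}: w(a)>w(b)\}$ is a ${\tt k}$-diagram.
   Context: Fix $n$ and ${\tt k}=\{k_1<\dots<k_{d-1}\}$ with $0<k_1<\dots<k_{d-1}<n$; set $k_0=0$, $k_d=n$, $I_i=[k_{i-1}+1,k_i]$. $S_n^{\tt k}$ is the set of $w\in S_n$ whose descents lie in ${\tt k}$, and $\mathbb{Y}_{\tt k}$ is the set of their inversion sets. $\Omega_{GL_n}=\{(a,b):1\le a<b\le n\}$ ordered by $(a',b')\preceq(a,b)$ iff $a\le a'$ and $b'\le b$; regions $\Lambda^{ij}_{\tt k}=I_i\times I_j$ for $i<j$. $S\subseteq\Omega_{GL_n}$ is a ${\tt k}$-diagram if $S\cap\Lambda^{ij}_{\tt k}$ is a lower order ideal of $\Lambda^{ij}_{\tt k}$ for every $i<j$, and for each $(a,b)$, with hook $H(a,b)=\{(a,l):a<l<b\}\cup\{(j,b):a<j<b\}$: if more than half of $H(a,b)$ lies in $S$ then $(a,b)\in S$, and if more than half lies outside $S$ then $(a,b)\notin S$. $\Theta_{\tt k}$ is the set of ${\tt k}$-diagrams. *)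

(* Defs.v *)
From mathcomp Require Import all_boot all_fingroup.
Set Implicit Arguments. Unset Strict Implicit. Unset Printing Implicit Defensive.

(* Positions and values are 1-based naturals in [1, n], as in the paper. *)

(* w(a) for a permutation w of 'I_n, in 1-based convention (0 if a out of range). *)
Definition pval (n : nat) (w : 'S_n) (a : nat) : nat :=
  match @insub nat (fun x => x < n) _ a.-1 with
  | Some i => (w i).+1
  | None => 0
  end.

Definition Omega (n a b : nat) : bool := [&& 1 <= a, a < b & b <= n].

Definition prec (a' b' a b : nat) : bool := (a <= a') && (b' <= b).

(* k = [:: k_1; ...; k_{d-1}], with 0 < k_1 < ... < k_{d-1} < n *)
Definition valid_k (n : nat) (k : seq nat) : Prop :=
  sorted ltn k /\ all (fun x => 0 < x < n) k.

(* the full list k_0 = 0, k_1, ..., k_{d-1}, k_d = n ; d = size k + 1 *)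
Definition kfull (n : nat) (k : seq nat) : seq nat := 0 :: rcons k n.
Definition kd (k : seq nat) : nat := (size k).+1.
Definition kk (n : nat) (k : seq nat) (i : nat) : nat := nth 0 (kfull n k) i.

Definition inblock (n : nat) (k : seq nat) (i x : nat) : bool :=
  (kk n k i.-1 < x) && (x <= kk n k i).

Definition descents_in (n : nat) (k : seq nat) (w : 'S_n) : Prop :=
  forall i, 1 <= i < n -> pval w i.+1 < pval w i -> i \in k.

Definition inv_set (n : nat) (w : 'S_n) (a b : nat) : bool :=
  Omega n a b && (pval w b < pval w a).

(* hook H(a,b): number of its elements in S and outside S *)
Definition hook_in (S : nat -> nat -> bool) (a b : nat) : nat :=
  \sum_(a.+1 <= l < b) (S a l : nat) + \sum_(a.+1 <= j < b) (S j b : nat).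
Definition hook_out (S : nat -> nat -> bool) (a b : nat) : nat :=
  \sum_(a.+1 <= l < b) (~~ S a l : nat) + \sum_(a.+1 <= j < b) (~~ S j b : nat).

Definition k_diagram (n : nat) (k : seq nat) (S : nat -> nat -> bool) : Prop :=
  [/\ (forall a b, S a b -> Omega n a b),
      (* S ∩ Λ^{ij} is a lower order ideal of Λ^{ij} = I_i × I_j, i < j *)
      (forall i j, 1 <= i -> i < j -> j <= kd k ->
         forall a b a' b',
           inblock n k i a -> inblock n k j b ->
           inblock n k i a' -> inblock n k j b' ->
           S a b -> prec a' b' a b -> S a' b')
    &
      (forall a b, Omega n a b ->
         (hook_in S a b + hook_out S a b < 2 * hook_in S a b -> S a b) /\
         (hook_in S a b + hook_out S a b < 2 * hook_out S a b -> ~~ S a b))].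

(* Main.v *)
Require Import Defs.
From mathcomp Require Import all_boot all_fingroup.
From mathcomp Require Import zify.

Lemma nth_mono (s : seq nat) p q : sorted ltn s -> p <= q -> q < size s ->
  nth 0 s p <= nth 0 s q.
Proof.
move=> so pq qs; rewrite leq_eqVlt in pq; case/orP: pq => [/eqP->//|pq].
apply: ltnW; apply: (sorted_ltn_nth ltn_trans 0 so) => //; rewrite inE //.
exact: ltn_trans pq qs.
Qed.

Lemma kfull_sorted n k : 0 < n -> valid_k n k -> sorted ltn (kfull n k).
Proof.
move=> n0 [so al]; rewrite /kfull /= rcons_path.
apply/andP; split.
  rewrite path_sortedE; last exact: ltn_trans.
  rewrite so andbT; apply/allP=> x xk; by case/andP: (allP al x xk).
have := mem_last 0 k; rewrite inE; case/orP=> [/eqP->|xk].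
  by [].
by case/andP: (allP al _ xk).
Qed.

Lemma size_kfull n k : size (kfull n k) = (kd k).+1.
Proof. by rewrite /kfull /= size_rcons. Qed.

Lemma kk_last n k : kk n k (kd k) = n.
Proof. by rewrite /kk /kfull /kd /= nth_rcons ltnn eqxx. Qed.

Lemma kk_mono n k p q : 0 < n -> valid_k n k -> p <= q -> q <= kd k -> kk n k p <= kk n k q.
Proof.
move=> n0 v pq qd; apply: nth_mono => //; first exact: kfull_sorted.
by rewrite size_kfull ltnS.
Qed.

Lemma kk_le_n n k p : 0 < n -> valid_k n k -> p <= kd k -> kk n k p <= n.
Proof. move=> n0 v pd; rewrite -{2}(kk_last n k); exact: kk_mono. Qed.

Lemma kk_lt n k p q : 0 < n -> valid_k n k -> p <= kd k -> q <= kd k -> kk n k p < kk n k q -> p < q.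
Proof.
move=> n0 v pd qd h; rewrite ltnNge; apply/negP=> qp.
have : kk n k q <= kk n k p by apply: kk_mono.
by rewrite leqNgt h.
Qed.

Lemma not_in_k n k i x : 0 < n -> valid_k n k -> 1 <= i <= kd k ->
  kk n k i.-1 < x -> x < kk n k i -> x \notin k.
Proof.
move=> n0 v /andP[i1 id] h1 h2; apply/negP=> /(nthP 0) [m ms e].
have em : kk n k m.+1 = x by rewrite /kk /kfull /= nth_rcons ms.
have md : m.+1 <= kd k by rewrite /kd ltnS ltnW.
rewrite -em in h1 h2.
have ipd : i.-1 <= kd k by lia.
have := @kk_lt n k _ _ n0 v ipd md h1; have := @kk_lt n k _ _ n0 v md id h2.
lia.
Qed.

Lemma block_mono n k (w : 'S_n) i : 0 < n -> valid_k n k -> descents_in k w -> 1 <= i <= kd k ->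
  forall d a, inblock n k i a -> inblock n k i (a + d) -> Defs.pval w a <= Defs.pval w (a + d).
Proof.
move=> n0 v dk id; elim=> [|d IH] a ha hd; first by rewrite addn0.
have hd' : inblock n k i (a + d).
  move: ha hd; rewrite /inblock; lia.
apply: leq_trans (IH a ha hd') _.
have kn : kk n k i <= n by apply: kk_le_n => //; case/andP: id.
rewrite leqNgt; apply/negP=> hlt.
rewrite addnS in hlt hd.
have hr : 1 <= a + d < n by move: hd ha kn; rewrite /inblock; lia.
have hin := dk _ hr hlt.
have : (a + d) \notin k.
  apply: (@not_in_k n k i (a + d) n0 v id); move: hd ha; rewrite /inblock; lia.
by rewrite hin.
Qed.

Lemma block_mono' n k (w : 'S_n) i a a' : 0 < n -> valid_k n k -> descents_in k w -> 1 <= i <= kd k ->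
  inblock n k i a -> inblock n k i a' -> a <= a' -> Defs.pval w a <= Defs.pval w a'.
Proof.
move=> n0 v dk id ha ha' le; have := @block_mono n k w i n0 v dk id (a' - a) a ha.
by rewrite subnKC //; apply.
Qed.

Lemma sum_bc (f : nat -> bool) m p :
  \sum_(m <= l < p) (f l : nat) + \sum_(m <= l < p) (~~ f l : nat) = p - m.
Proof.
rewrite -big_split /= (eq_bigr (fun _ => 1)); last by move=> l _; case: (f l).
by rewrite sum_nat_const_nat muln1.
Qed.

Lemma hook_sum (S : nat -> nat -> bool) a b :
  hook_in S a b + hook_out S a b = 2 * (b - a.+1).
Proof.
rewrite /hook_in /hook_out.
have := sum_bc (S a) a.+1 b; have := sum_bc (fun j => S j b) a.+1 b; lia.
Qed.

Lemma hook_bound (S : nat -> nat -> bool) a b :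
  (forall l, a < l < b -> S a l + S l b <= 1) -> hook_in S a b <= b - a.+1.
Proof.
move=> h; rewrite /hook_in -big_split /=.
rewrite -[X in _ <= X]muln1 -sum_nat_const_nat big_seq [X in _ <= X]big_seq.
by apply: leq_sum => l; rewrite mem_index_iota; exact: h.
Qed.

Lemma hook_bound_out (S : nat -> nat -> bool) a b :
  (forall l, a < l < b -> ~~ S a l + ~~ S l b <= 1) -> hook_out S a b <= b - a.+1.
Proof.
move=> h; rewrite /hook_out -big_split /=.
rewrite -[X in _ <= X]muln1 -sum_nat_const_nat big_seq [X in _ <= X]big_seq.
by apply: leq_sum => l; rewrite mem_index_iota; exact: h.
Qed.

Theorem claim2p4 (n : nat) (k : seq nat) (w : 'S_n) :
  valid_k n k -> descents_in k w -> k_diagram n k (inv_set w).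
Proof.
move=> v dk; case: (posnP n) => [n0|n0].
  split.
  - by move=> a b /andP[/and3P[_ ab bn] _]; exfalso; lia.
  - by move=> i j _ _ _ a b a' b' _ _ _ _ /andP[/and3P[_ ab bn] _]; exfalso; lia.
  - by move=> a b /and3P[_ ab bn]; exfalso; lia.
split.
- by move=> a b /andP[].
- move=> i j i1 ij jd a b a' b' ha hb ha' hb' /andP[_ hab] /andP[aa bb].
  have id : 1 <= i <= kd k by rewrite i1 /= ltnW // (leq_trans ij).
  have jd' : 1 <= j <= kd k by rewrite jd (leq_trans i1 (ltnW ij)).
  have k1 : kk n k i <= kk n k j.-1 by apply: kk_mono => //; lia.
  have kn : kk n k j <= n by apply: kk_le_n.
  apply/andP; split.
    move: ha' hb' k1 kn; rewrite /inblock /Omega; lia.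
  have h1 := @block_mono' n k w j b' b n0 v dk jd' hb' hb bb.
  have h2 := @block_mono' n k w i a a' n0 v dk id ha ha' aa.
  exact: leq_ltn_trans h1 (leq_trans hab h2).
- move=> a b om; rewrite hook_sum; split.
  + move=> h; apply/negPn/negP=> nab.
    have : hook_in (inv_set w) a b <= b - a.+1.
      apply: hook_bound=> l _; rewrite /inv_set.
      move: nab; rewrite /inv_set om /= -leqNgt => nab.
      have : ~~ ((Defs.pval w l < Defs.pval w a) && (Defs.pval w b < Defs.pval w l)).
        by apply/negP=> /andP[]; lia.
      case: (Defs.pval w l < Defs.pval w a); case: (Defs.pval w b < Defs.pval w l);
        rewrite ?andbF ?andbT ?addn0 ?add0n ?leq_b1 //.
    lia.
  + move=> h; apply/negP=> ab.
    have : hook_out (inv_set w) a b <= b - a.+1.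
      apply: hook_bound_out=> l al; rewrite /inv_set.
      have o1 : Omega n a l by move: om al; rewrite /Omega; lia.
      have o2 : Omega n l b by move: om al; rewrite /Omega; lia.
      move: ab; rewrite /inv_set o1 o2 om /= => ab; lia.
    lia.
Qed.
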